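(* Let $N$ be the number of experts, $T$ the time horizon, and run EXP4.AT with learning rate $\eta=\sqrt{\frac{\ln N}{2T}}$. Then for any sequence of true labels $y_1,\dots,y_T\in\{0,1\}$ and expert advice $(\mathcal{E}^i_t)$, the predictions $\hat y_1,\dots,\hat y_T$ output by EXP4.AT satisfy $$\mathbb{E}\Bigl[\sum_{t=1}^T\mathbb{1}\{\hat y_t\ne y_t\}\Bigr] \le \inf_{j\in[N]}\sum_{t=1}^T\mathbb{1}\{\mathcal{E}^j_t\ne y_t\} + 3\sqrt{T\ln N}.$$
   Context: Binary prediction with expert advice under apple tasting feedback, where the labels and advice are fixed in advance (not depending on the algorithm's randomness). EXP4.AT with learning rate $\eta\in(0,\tfrac12)$: let $q_1$ be uniform on $[N]$. In each round $t=1,\dots,T$: receive advice $\mathcal{E}^1_t,\dots,\mathcal{E}^N_t\in\{0,1\}$; set $p_t^1=(1-\eta)\sum_{i=1}^N q_t^i\mathcal{E}^i_t+\eta$ and $p_t^0=1-p_t^1$; predict $\hat y_t=1$ with probability $p_t^1$ and $\hat y_t=0$ otherwise; the true label $y_t$ is observed only if $\hat y_t=1$; define $\hat\ell_t(y)=\mathbb{1}\{y\ne y_t\}\mathbb{1}\{\hat y_t=1\}/p_t^1$ for $y\in\{0,1\}$; update $q_{t+1}^i=\frac{q_t^i\exp(-\eta\hat\ell_t(\mathcal{E}^i_t))}{\sum_{j=1}^N q_t^j\exp(-\eta\hat\ell_t(\mathcal{E}^j_t))}$. The expectation is over the algorithm's randomness. *)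

(* Defs.v *)
From HB Require Import structures.
From mathcomp Require Import all_boot all_order all_algebra.
From mathcomp Require Import all_classical all_reals all_analysis.
Set Implicit Arguments. Unset Strict Implicit. Unset Printing Implicit Defensive.
Import Order.TTheory GRing.Theory Num.Theory.
Local Open Scope ring_scope.

(* Rounds are indexed 0 .. T-1 (round t of the paper is index t-1).          *)

Section EXP4AT.
Variables (R : realType) (N : nat) (eta : R) (E : nat -> 'I_N -> bool).

Definition exp4_p1_of (q : 'I_N -> R) (t : nat) : R :=
  (1 - eta) * (\sum_(i < N) q i * (E t i)%:R) + eta.

Definition exp4_lhat_of (y yh : nat -> bool) (q : 'I_N -> R) (t : nat) (b : bool) : R :=
  ((b != y t) && yh t)%:R / exp4_p1_of q t.

Fixpoint exp4_q (y yh : nat -> bool) (t : nat) : 'I_N -> R :=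
  match t with
  | 0 => fun _ => N%:R^-1
  | t'.+1 =>
      let q := exp4_q y yh t' in
      let w := fun i => q i * expR (- (eta * exp4_lhat_of y yh q t' (E t' i))) in
      fun i => w i / \sum_(j < N) w j
  end.

Definition exp4_p1 (y yh : nat -> bool) (t : nat) : R :=
  exp4_p1_of (exp4_q y yh t) t.

(* extend a prediction vector over 'I_T to all of nat (irrelevant beyond T) *)
Definition ext_pred (T : nat) (yh : {ffun 'I_T -> bool}) : nat -> bool :=
  fun n => match @insub nat (fun k => k < T)%N 'I_T n with
           | Some i => yh i | None => false end.

Definition exp4_prob (T : nat) (y : nat -> bool) (yh : {ffun 'I_T -> bool}) : R :=
  \prod_(t < T) (if yh t then exp4_p1 y (ext_pred yh) t
                 else 1 - exp4_p1 y (ext_pred yh) t).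

Definition exp4_expected_mistakes (T : nat) (y : nat -> bool) : R :=
  \sum_(yh : {ffun 'I_T -> bool})
     exp4_prob y yh * (\sum_(t < T) (yh t != y t)%:R).

End EXP4AT.

(* Main.v *)
Require Import Defs.
From HB Require Import structures.
From mathcomp Require Import all_boot all_order all_algebra.
From mathcomp Require Import all_classical all_reals all_analysis.
From mathcomp Require Import ring lra.
Import Order.TTheory GRing.Theory Num.Theory.
Local Open Scope ring_scope.
Set Implicit Arguments. Unset Strict Implicit. Unset Printing Implicit Defensive.


Definition upd (h : nat -> bool) (t : nat) (b : bool) : nat -> bool :=
  fun n => if n == t then b else h n.

Lemma ext_pred_ord T (yh : {ffun 'I_T -> bool}) (i : 'I_T) :
  ext_pred yh i = yh i.
Proof.
rewrite /ext_pred insubT /=; first exact: (ltn_ord i).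
by move=> H; congr (yh _); apply: val_inj.
Qed.

Lemma ext_pred_ge T (yh : {ffun 'I_T -> bool}) n : (T <= n)%N -> ext_pred yh n = false.
Proof. by move=> H; rewrite /ext_pred insubF // ltnNge H. Qed.

Definition glue T (f : {ffun 'I_T -> bool}) (b : bool) : {ffun 'I_T.+1 -> bool} :=
  [ffun i : 'I_T.+1 => upd (ext_pred f) T b i].

Lemma ext_glue T (f : {ffun 'I_T -> bool}) b :
  ext_pred (glue f b) = upd (ext_pred f) T b.
Proof.
apply: funext => n; case: (ltnP n T.+1) => H.
  by have := ext_pred_ord (glue f b) (Ordinal H); rewrite ffunE /= => ->.
rewrite ext_pred_ge // /upd.
have -> : (n == T) = false by apply/eqP => E; rewrite E ltnn in H.
by rewrite ext_pred_ge // ltnW.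
Qed.

Definition unglue T (g : {ffun 'I_T.+1 -> bool}) : {ffun 'I_T -> bool} * bool :=
  ([ffun j : 'I_T => g (widen_ord (leqnSn T) j)], g ord_max).

Lemma glue_bij T : bijective (fun p : {ffun 'I_T -> bool} * bool => glue p.1 p.2).
Proof.
exists (@unglue T).
  case=> f b /=; rewrite /unglue; congr pair.
    by apply/ffunP => j; rewrite !ffunE /upd /= ltn_eqF // ext_pred_ord.
  by rewrite ffunE /upd /= eqxx.
move=> g; apply/ffunP => i; rewrite /unglue ffunE /upd /=.
case: eqP => Hi.
  by congr (g _); apply: val_inj; rewrite /= Hi.
have HiT : (i < T)%N by have := ltn_ord i; rewrite ltnS leq_eqVlt => /orP[/eqP|].
by rewrite (ext_pred_ord _ (Ordinal HiT)) ffunE; congr (g _); apply: val_inj.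
Qed.

Section Gen.
Variable R : realType.
Variable P : nat -> (nat -> bool) -> R.
Hypothesis Ploc : forall t h h', (forall k, (k < t)%N -> h k = h' k) -> P t h = P t h'.
Hypothesis P01 : forall t h, 0 <= P t h <= 1.

Definition gprob T (yh : {ffun 'I_T -> bool}) : R :=
  \prod_(t < T) (if yh t then P t (ext_pred yh) else 1 - P t (ext_pred yh)).

Definition Ex T (F : (nat -> bool) -> R) : R :=
  \sum_(yh : {ffun 'I_T -> bool}) gprob yh * F (ext_pred yh).

Lemma upd_lt h t b k : (k < t)%N -> upd h t b k = h k.
Proof. by move=> H; rewrite /upd ltn_eqF. Qed.

Lemma gprob_glue T (f : {ffun 'I_T -> bool}) b :
  gprob (glue f b) = gprob f * (if b then P T (ext_pred f) else 1 - P T (ext_pred f)).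
Proof.
rewrite /gprob big_ord_recr /= ext_glue; congr (_ * _).
  apply: eq_bigr => i _; rewrite ffunE /= upd_lt // ext_pred_ord.
  by rewrite (Ploc (h' := ext_pred f)) // => k Hk; apply: upd_lt; apply: ltn_trans Hk _.
rewrite ffunE /upd /= eqxx (Ploc (h' := ext_pred f)) // => k Hk; exact: upd_lt.
Qed.

Lemma Ex_succ T F : Ex T.+1 F =
  Ex T (fun h => P T h * F (upd h T true) + (1 - P T h) * F (upd h T false)).
Proof.
rewrite /Ex (reindex (fun p : {ffun 'I_T -> bool} * bool => glue p.1 p.2)); last first.
  exact/onW_bij/glue_bij.
rewrite [LHS](_ : _ = \sum_(p : {ffun 'I_T -> bool} * bool) (gprob (glue p.1 p.2) * F (ext_pred (glue p.1 p.2)))) //.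
rewrite -(pair_bigA _ (fun f b => gprob (glue f b) * F (ext_pred (glue f b)))) /=; apply: eq_bigr => f _; rewrite big_bool /= !gprob_glue !ext_glue.
by rewrite [RHS]mulrDr !mulrA.
Qed.

Lemma gprob_ge0 T yh : 0 <= @gprob T yh.
Proof.
apply: prodr_ge0 => t _; have /andP[h1 h2] := P01 t (ext_pred yh).
by case: (yh t); lra.
Qed.

Lemma Ex_le T F1 F2 : (forall h, F1 h <= F2 h) -> Ex T F1 <= Ex T F2.
Proof. by move=> H; apply: ler_sum => yh _; apply: ler_wpM2l; [exact: gprob_ge0|]. Qed.

Lemma Ex_ext T F1 F2 : (forall h, F1 h = F2 h) -> Ex T F1 = Ex T F2.
Proof. by move=> H; apply: eq_bigr => yh _; rewrite H. Qed.

Lemma Ex_one T : Ex T (fun _ => 1) = 1.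
Proof.
elim: T => [|T IH].
  rewrite /Ex (eq_bigr (fun _ => 1)); last by move=> yh _; rewrite /gprob big_ord0 mulr1.
  by rewrite sumr_const card_ffun card_bool card_ord expn0.
rewrite Ex_succ -[RHS]IH; apply: Ex_ext => h; lra.
Qed.

Lemma Ex_lin T F c d : Ex T (fun h => c * F h + d) = c * Ex T F + d.
Proof.
rewrite -[d in RHS]mulr1 -(Ex_one T) /Ex mulr_sumr mulr_sumr -big_split /=.
by apply: eq_bigr => yh _; rewrite mulr1; lra.
Qed.

Variable G : nat -> (nat -> bool) -> R.
Hypothesis Gloc : forall t h h', (forall k, (k <= t)%N -> h k = h' k) -> G t h = G t h'.
Hypothesis Gcond : forall t h,
  P t h * G t (upd h t true) + (1 - P t h) * G t (upd h t false) <= 0.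

Lemma tower T : Ex T (fun h => \sum_(t < T) G t h) <= 0.
Proof.
elim: T => [|T IH].
  rewrite /Ex big1 // => yh _; by rewrite big_ord0 mulr0.
rewrite Ex_succ; apply: le_trans IH; apply: Ex_le => h.
have E b : \sum_(t < T.+1) G t (upd h T b) = \sum_(t < T) G t h + G T (upd h T b).
  rewrite big_ord_recr /=; congr (_ + _); apply: eq_bigr => i _.
  by apply: Gloc => k Hk; apply: upd_lt; apply: leq_ltn_trans Hk _.
rewrite !E; have := Gcond T h; lra.
Qed.
End Gen.


Lemma expN_le (R : realType) (x : R) : 0 <= x -> expR (- x) <= 1 - x + x ^+ 2.
Proof.
move=> x0; have uv : expR (- x) * expR x = 1 by rewrite mulrC expRxMexpNx_1.
have u0 := expR_gt0 (- x); have v1 := expR_ge1Dx x.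
have h1 : expR (- x) * (1 + x) <= 1 by rewrite -[X in _ <= X]uv; apply: ler_wpM2l; [exact: ltW|exact: v1].
have h3 : 0 <= x ^+ 3 by apply: exprn_ge0.
nra.
Qed.

Lemma exp_le (R : realType) (x : R) : 0 <= x -> x <= 1 -> expR x <= 1 + x + 2 * x ^+ 2.
Proof.
move=> x0 x1.
have ex : expR x = expR (x / 2) ^+ 2 by rewrite expr2 -expRD; congr expR; lra.
have vw : expR (x / 2) * expR (- (x / 2)) = 1 by rewrite expRxMexpNx_1.
have w1 := expR_ge1Dx (- (x / 2)).
have v0 := expR_gt0 (x / 2).
have hv : expR (x / 2) * (1 - x / 2) <= 1.
  by rewrite -[X in _ <= X]vw; apply: ler_wpM2l; [exact: ltW| lra].
have hv0 : 0 <= expR (x / 2) * (1 - x / 2) by apply: mulr_ge0; lra.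
have hsq : (expR (x / 2) * (1 - x / 2)) ^+ 2 <= 1.
  by rewrite expr2; have := mulr_ile1 hv0 hv0 hv hv.
have key : 1 <= (1 + x + 2 * x ^+ 2) * (1 - x / 2) ^+ 2.
  have h : 0 <= x ^+ 2 * ((1 - x) * (5 - 2 * x)).
    by apply: mulr_ge0; [exact: sqr_ge0| apply: mulr_ge0; lra].
  nra.
have k0 : 0 < (1 - x / 2) ^+ 2 by apply: exprn_gt0; lra.
rewrite ex -(ler_pM2r k0) -exprMn; exact: le_trans hsq key.
Qed.

Definition rb_g (R : realType) (N : nat) (q : 'I_N -> R) (e : 'I_N -> bool)
  (yt : bool) (j : 'I_N) (et p : R) (b : bool) : R :=
    ln (\sum_i q i * expR (- (et * (((e i != yt) && b)%:R / p))))
    + et * (((e j != yt) && b)%:R / p) + et * (b != yt)%:R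
    - et * (e j != yt)%:R - 2 * et ^+ 2.

Lemma round_bound (R : realType) (N : nat) (q : 'I_N -> R) (e : 'I_N -> bool)
  (yt : bool) (j : 'I_N) (et p : R) :
  0 < et -> et <= 1 / 2 -> (forall i, 0 < q i) -> \sum_i q i = 1 ->
  p = (1 - et) * (\sum_i q i * (e i)%:R) + et ->
  p * rb_g q e yt j et p true + (1 - p) * rb_g q e yt j et p false <= 0.
Proof.
move=> et0 et1 qpos qsum hp.
set g := rb_g q e yt j et p.
set a := \sum_i q i * (e i)%:R.
have a0 : 0 <= a by apply: sumr_ge0 => i _; apply: mulr_ge0; [exact: ltW| exact: ler0n].
have a1 : a <= 1.
  rewrite -qsum; apply: ler_sum => i _; have := qpos i; case: (e i) => /= qi; lra.
have h1 : 0 <= 1 - et by lra.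
have h2 : 0 <= 1 - a by lra.
have {}hp : p = (1 - et) * a + et by rewrite hp.
have pe : et <= p by rewrite hp; have := mulr_ge0 h1 a0; lra.
have pa : a <= p.
  rewrite hp -subr_ge0 (_ : _ - a = et * (1 - a)); last by ring.
  exact: mulr_ge0 (ltW et0) h2.
have p0 : 0 < p by lra.
have g0 : g false = et * yt%:R - et * (e j != yt)%:R - 2 * et ^+ 2.
  rewrite /g /rb_g (eq_bigr q); last first.
    by move=> i _; rewrite andbF /= mul0r mulr0 oppr0 expR0 mulr1.
  rewrite qsum ln1 andbF /= mul0r mulr0 ?add0r; by case: (yt).
set x := et / p.
have x0 : 0 <= x by apply: divr_ge0; lra.
have x1 : x <= 1 by rewrite /x ler_pdivrMr // mul1r.
have hx : p * x = et by rewrite /x mulrC divfK //; lra.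
have hax : a * x <= et by rewrite -hx; apply: ler_wpM2r.
have haxe : a * x * et <= et * et by apply: ler_wpM2r; lra.
pose c : R := (e j != yt)%:R.
pose Z := \sum_i q i * expR (- (et * (((e i != yt) && true)%:R / p))).
have gt : g true = ln Z + et * (c / p) + et * (~~ yt)%:R - et * c - 2 * et ^+ 2.
  by rewrite /g /rb_g andbT.
have g0' : g false = et * yt%:R - et * c - 2 * et ^+ 2 by rewrite g0.
have hc : p * (et * (c / p)) = et * c by field; lra.
rewrite gt g0'.
have -> : p * (ln Z + et * (c / p) + et * (~~ yt)%:R - et * c - 2 * et ^+ 2) +
   (1 - p) * (et * yt%:R - et * c - 2 * et ^+ 2) =
   p * ln Z + p * (et * (c / p)) + p * et * (~~ yt)%:R + (1 - p) * et * yt%:R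
   - et * c - 2 * et ^+ 2 by ring.
rewrite hc.
have l5 : 0 <= et * et * a by apply: mulr_ge0 => //; apply: mulr_ge0; lra.
have l6 : p * et = a * et - et * et * a + et * et by rewrite hp; ring.
have l7 : et * et * a <= et * et by rewrite -[X in _ <= X]mulr1; apply: ler_wpM2l => //; apply: mulr_ge0; lra.
have [Hy|Hy] : yt = true \/ yt = false by case: (yt); auto.
-
  have Ze : Z = a + (1 - a) * expR (- x).
    rewrite /Z Hy (eq_bigr (fun i => q i * (e i)%:R + (q i - q i * (e i)%:R) * expR (- x))).
      by rewrite big_split /= -mulr_suml sumrB qsum.
    move=> i _; rewrite andbT; case: (e i) => /=; rewrite ?mulr1 ?mulr0 ?mul0r ?oppr0 ?expR0.
      by rewrite !(mulr0, oppr0, expR0, mulr1, subrr, mul0r, addr0, add0r).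
    by rewrite /x !(mulr0, oppr0, expR0, mulr1, subrr, mul0r, addr0, add0r, mul1r, subr0).
  have Z0 : 0 < Z by rewrite Ze; have := expR_gt0 (- x); nra.
  have ZE : Z * expR x = 1 + a * (expR x - 1).
    rewrite Ze mulrDl -mulrA [expR (- x) * _]mulrC expRxMexpNx_1; ring.
  have lnZ : ln Z = ln (Z * expR x) - x.
    by rewrite lnM ?expRK ?posrE ?expR_gt0 //; ring.
  have l1 : ln (Z * expR x) <= a * (expR x - 1).
    have := expR_ge1Dx x => ex1.
    rewrite ZE le_ln1Dx //; have := mulr_ge0 a0 (_ : 0 <= expR x - 1); nra.
  have l2 : a * (expR x - 1) <= a * (x + 2 * x ^+ 2).
    by apply: ler_wpM2l => //; have := exp_le x0 x1; lra.
  have l3 : p * ln Z <= p * (a * (x + 2 * x ^+ 2) - x) by apply: ler_wpM2l; lra.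
  have l4 : p * (a * (x + 2 * x ^+ 2) - x) = a * et + 2 * (a * x * et) - et.
    by rewrite -hx; ring.
  rewrite Hy /=; lra.
-
  have Ze : Z = 1 - a + a * expR (- x).
    rewrite /Z Hy (eq_bigr (fun i => (q i - q i * (e i)%:R) + q i * (e i)%:R * expR (- x))).
      by rewrite big_split /= sumrB qsum -mulr_suml.
    move=> i _; rewrite andbT; case: (e i) => /=; rewrite ?mulr1 ?mulr0 ?mul0r ?oppr0 ?expR0.
      by rewrite /x !(mulr0, oppr0, expR0, mulr1, subrr, mul0r, addr0, add0r, mul1r, subr0).
    by rewrite !(mulr0, oppr0, expR0, mulr1, subrr, mul0r, addr0, add0r, subr0).
  have l1 : ln Z <= a * (expR (- x) - 1).
    have -> : Z = 1 + a * (expR (- x) - 1) by rewrite Ze; ring.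
    rewrite le_ln1Dx //; have := expR_gt0 (- x); nra.
  have l2 : a * (expR (- x) - 1) <= a * (x ^+ 2 - x).
    by apply: ler_wpM2l => //; have := expN_le x0; lra.
  have l3 : p * ln Z <= p * (a * (x ^+ 2 - x)) by apply: ler_wpM2l; lra.
  have l4 : p * (a * (x ^+ 2 - x)) = a * x * et - a * et by rewrite -hx; ring.
  rewrite Hy /=; lra.
Qed.


Section Exp4.
Variables (R : realType) (N : nat) (eta : R) (E : nat -> 'I_N -> bool) (y : nat -> bool).
Hypothesis N0 : (0 < N)%N.

Lemma q_loc t h h' : (forall k, (k < t)%N -> h k = h' k) ->
  exp4_q eta E y h t = exp4_q eta E y h' t.
Proof.
elim: t => [|t IH] H //=.
rewrite IH; last by move=> k Hk; apply: H; apply: leqW.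
by rewrite /exp4_lhat_of (H t (ltnSn t)).
Qed.

Lemma sum_pos (f : 'I_N -> R) : (forall i, 0 < f i) -> 0 < \sum_i f i.
Proof.
move=> fp; pose i0 := Ordinal N0.
apply: (lt_le_trans (fp i0)); rewrite (bigD1 i0) //= lerDl.
by apply: sumr_ge0 => i _; exact: ltW.
Qed.

Lemma q_dist t h : (forall i, 0 < exp4_q eta E y h t i) /\ \sum_i exp4_q eta E y h t i = 1.
Proof.
elim: t => [|t [IHp IHs]] /=.
  split; first by move=> i; rewrite invr_gt0 ltr0n.
  by rewrite sumr_const card_ord -[_ *+ N]mulr_natr mulVf // pnatr_eq0 -lt0n N0.
pose w := fun i => exp4_q eta E y h t i *
   expR (- (eta * exp4_lhat_of eta E y h (exp4_q eta E y h t) t (E t i))).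
have wp : forall i, 0 < w i by move=> i; apply: mulr_gt0 => //; exact: expR_gt0.
have S0 := sum_pos wp.
split; first by move=> i; exact: (divr_gt0 (wp i) S0).
transitivity ((\sum_i w i) / (\sum_j w j)); first by rewrite mulr_suml.
by rewrite divff //; exact: lt0r_neq0.
Qed.

Lemma p1_01 t h : 0 <= eta <= 1 -> 0 <= exp4_p1 eta E y h t <= 1.
Proof.
move=> /andP[e0 e1]; have [qp qs] := q_dist t h.
rewrite /exp4_p1 /exp4_p1_of.
set a := \sum_i _.
have a0 : 0 <= a by apply: sumr_ge0 => i _; apply: mulr_ge0; [exact: ltW| exact: ler0n].
have a1 : a <= 1.
  rewrite -qs; apply: ler_sum => i _; have := qp i; case: (E t i) => /= qi; lra.
have h1 : 0 <= 1 - eta by lra.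
have := mulr_ge0 h1 a0; have := ler_wpM2l h1 a1; rewrite mulr1 => ??.
apply/andP; split; lra.
Qed.

Lemma p_loc t h h' : (forall k, (k < t)%N -> h k = h' k) ->
  exp4_p1 eta E y h t = exp4_p1 eta E y h' t.
Proof. by move=> H; rewrite /exp4_p1 (q_loc H). Qed.


Variable j : 'I_N.
Definition lh h t b := exp4_lhat_of eta E y h (exp4_q eta E y h t) t b.
Definition Zt h t := \sum_i exp4_q eta E y h t i * expR (- (eta * lh h t (E t i))).
Definition Gm t h := (ln (Zt h t) + eta * lh h t (E t j)) +
  (eta * (h t != y t)%:R - eta * (E t j != y t)%:R - 2 * eta ^+ 2).

Lemma Gm_loc t h h' : (forall k, (k <= t)%N -> h k = h' k) -> Gm t h = Gm t h'.
Proof.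
move=> H; have Hq : exp4_q eta E y h t = exp4_q eta E y h' t.
  by apply: q_loc => k Hk; apply: H; exact: ltnW.
by rewrite /Gm /Zt /lh Hq /exp4_lhat_of (H t (leqnn t)).
Qed.

Lemma Gm_cond t h : 0 < eta -> eta <= 1 / 2 ->
  exp4_p1 eta E y h t * Gm t (upd h t true) +
  (1 - exp4_p1 eta E y h t) * Gm t (upd h t false) <= 0.
Proof.
move=> e0 e1.
have Hq b : exp4_q eta E y (upd h t b) t = exp4_q eta E y h t.
  by apply: q_loc => k Hk; apply: upd_lt.
have HG b : Gm t (upd h t b) =
    rb_g (exp4_q eta E y h t) (E t) (y t) j eta (exp4_p1 eta E y h t) b.
  by rewrite /Gm /Zt /lh /rb_g Hq /exp4_lhat_of /upd eqxx /exp4_p1 !addrA.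
rewrite !HG; have [qp qs] := q_dist t h.
by apply: round_bound.
Qed.

Lemma tele T h : \sum_(t < T) (ln (Zt h t) + eta * lh h t (E t j)) =
  ln (exp4_q eta E y h 0 j) - ln (exp4_q eta E y h T j).
Proof.
elim: T => [|T IH]; first by rewrite big_ord0 subrr.
have -> : exp4_q eta E y h T.+1 j =
   exp4_q eta E y h T j * expR (- (eta * lh h T (E T j))) / Zt h T by [].
rewrite big_ord_recr /= IH.
have [qp qs] := q_dist T h.
have Z0 : 0 < Zt h T by apply: sum_pos => i; apply: mulr_gt0 => //; exact: expR_gt0.
rewrite ln_div ?lnM ?expRK ?posrE ?expR_gt0 //; last by apply: mulr_gt0 => //; exact: expR_gt0.
ring.
Qed.

Lemma main_bound T : 0 < eta -> eta <= 1 / 2 ->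
  eta * exp4_expected_mistakes eta E T y <=
  ln N%:R + eta * \sum_(t < T) (E t j != y t)%:R + 2 * eta ^+ 2 * T%:R.
Proof.
move=> e0 e1.
pose P := fun t h => exp4_p1 eta E y h t.
have Pl : forall t h h', (forall k, (k < t)%N -> h k = h' k) -> P t h = P t h'.
  by move=> t h h' H; apply: p_loc.
have P01 : forall t h, 0 <= P t h <= 1.
  by move=> t h; apply: p1_01; apply/andP; split; lra.
have tw := tower Pl P01 Gm_loc (fun t h => Gm_cond t h e0 e1) T.
pose M : (nat -> bool) -> R := fun h => \sum_(t < T) (h t != y t)%:R.
pose K := - ln N%:R - eta * \sum_(t < T) (E t j != y t)%:R - 2 * eta ^+ 2 * T%:R.
have pw : forall h, eta * M h + K <= \sum_(t < T) Gm t h.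
  move=> h; rewrite /Gm big_split /= tele.
  have [qp qs] := q_dist T h.
  have lq : ln (exp4_q eta E y h T j) <= 0.
    apply: ln_le0; rewrite -qs (bigD1 j) //= lerDl.
    by apply: sumr_ge0 => i _; exact: ltW.
  have l0 : ln (exp4_q eta E y h 0 j) = - ln N%:R.
    by rewrite /= lnV // posrE ltr0n.
  rewrite l0 !sumrB -!mulr_sumr sumr_const card_ord /K /M -mulr_natr.
  lra.
have := le_trans (Ex_le P01 T pw) tw; rewrite (Ex_lin Pl).
have -> : Ex P T M = exp4_expected_mistakes eta E T y.
  rewrite /exp4_expected_mistakes /Ex /gprob /exp4_prob; apply: eq_bigr => yh _.
  by congr (_ * _); apply: eq_bigr => t _; rewrite ext_pred_ord.
rewrite /K; lra.
Qed.

Definition G1 t (h : nat -> bool) : R := (h t != y t)%:R - (E t j != y t)%:R.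

Lemma one_bound T : N = 1%N -> eta = 0 ->
  exp4_expected_mistakes eta E T y <= \sum_(t < T) (E t j != y t)%:R.
Proof.
move=> N1 e0.
have ij : forall i : 'I_N, i = j.
  move=> i; apply: val_inj.
  have hi := leq_trans (ltn_ord i) (eq_leq N1); have hj := leq_trans (ltn_ord j) (eq_leq N1).
  move: hi hj.
  by rewrite !ltnS !leqn0 => /eqP hi /eqP hj /=; rewrite hi hj.
pose P := fun t h => exp4_p1 eta E y h t.
have Pl : forall t h h', (forall k, (k < t)%N -> h k = h' k) -> P t h = P t h'.
  by move=> t h h' H; apply: p_loc.
have P01 : forall t h, 0 <= P t h <= 1.
  by move=> t h; apply: p1_01; rewrite e0 lexx ler01.
have Pj : forall t h, P t h = (E t j)%:R.
  move=> t h; rewrite /P /exp4_p1 /exp4_p1_of.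
  have [qp qs] := q_dist t h.
  set q := exp4_q eta E y h t in qp qs *.
  rewrite e0 subr0 mul1r addr0.
  rewrite (eq_bigr (fun i => q i * (E t j)%:R)); last first.
    by move=> i _; rewrite -(ij i).
  by rewrite -mulr_suml qs mul1r.
have Gl : forall t h h', (forall k, (k <= t)%N -> h k = h' k) -> G1 t h = G1 t h'.
  by move=> t h h' H; rewrite /G1 (H t (leqnn t)).
have Gc : forall t h, P t h * G1 t (upd h t true) + (1 - P t h) * G1 t (upd h t false) <= 0.
  move=> t h; rewrite Pj /G1 /upd eqxx.
  by case: (E t j); case: (y t); rewrite /= ?mul0r ?mul1r ?subrr ?subr0 ?mulr0 ?addr0 ?add0r ?lexx ?oppr_le0 ?ler01.
have tw := tower Pl P01 Gl Gc T.
pose M : (nat -> bool) -> R := fun h => \sum_(t < T) (h t != y t)%:R.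
pose K : R := - \sum_(t < T) (E t j != y t)%:R.
have pw : forall h, 1 * M h + K <= \sum_(t < T) G1 t h.
  by move=> h; rewrite /G1 sumrB /M /K mul1r.
have := le_trans (Ex_le P01 T pw) tw; rewrite (Ex_lin Pl).
have -> : Ex P T M = exp4_expected_mistakes eta E T y.
  rewrite /exp4_expected_mistakes /Ex /gprob /exp4_prob; apply: eq_bigr => yh _.
  by congr (_ * _); apply: eq_bigr => t _; rewrite ext_pred_ord.
rewrite /K; lra.
Qed.

End Exp4.

Unset Implicit Arguments.


Theorem theorem3 (R : realType) (N T : nat) (E : nat -> 'I_N -> bool)
    (y : nat -> bool) :
  (0 < N)%N ->
  Num.sqrt (ln (N%:R : R) / (2 * T%:R)) < 1 / 2 ->
  forall j : 'I_N,
    exp4_expected_mistakes (Num.sqrt (ln (N%:R : R) / (2 * T%:R))) E T y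
    <= \sum_(t < T) (E t j != y t)%:R + 3 * Num.sqrt (T%:R * ln (N%:R : R)).
Proof.
move=> N0 heta j.
set eta := Num.sqrt _ in heta *.
case: T => [|T] in eta heta *.
  rewrite /exp4_expected_mistakes big1; last by move=> yh _; rewrite big_ord0 mulr0.
  by rewrite big_ord0 mul0r sqrtr0 mulr0 addr0.
have L0 : 0 <= ln (N%:R : R) by apply: ln_ge0; rewrite ler1n.
have S0 : 0 <= Num.sqrt (T.+1%:R * ln (N%:R : R)) by apply: sqrtr_ge0.
have [N1|N2] : N = 1%N \/ (1 < N)%N by case: N N0 {j E eta heta L0 S0} => [|[|n]] //; auto.
  have e0 : eta = 0.
    by rewrite /eta N1 ln1 mul0r sqrtr0.
  apply: le_trans (one_bound E y N0 j T.+1 N1 e0) _; rewrite lerDl.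
  by apply: mulr_ge0.
pose L := ln (N%:R : R).
have Lp : 0 < L by apply: ln_gt0; rewrite ltr1n.
have T0 : 0 < (T.+1)%:R :> R by rewrite ltr0n.
have q0 : 0 < L / (2 * T.+1%:R) by apply: divr_gt0 => //; lra.
have ep : 0 < eta by rewrite /eta sqrtr_gt0.
have e2 : eta ^+ 2 = L / (2 * T.+1%:R) by rewrite /eta sqr_sqrtr // ltW.
have mb := main_bound E y N0 j T.+1 ep (ltW heta).
set s := Num.sqrt _.
have s2 : s ^+ 2 = T.+1%:R * L by rewrite /s sqr_sqrtr // mulr_ge0 // ltW.
have u2 : (s * eta) ^+ 2 = L ^+ 2 / 2.
  rewrite exprMn s2 e2; field; lra.
have u0 : 0 <= s * eta by apply: mulr_ge0 => //; exact: ltW.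
have key : 2 * L <= 3 * (s * eta) by nra.
have e2T : 2 * eta ^+ 2 * T.+1%:R = L by rewrite e2; field; lra.
rewrite e2T in mb.
rewrite -(ler_pM2l ep); apply: le_trans mb _.
rewrite mulrDr (_ : eta * (3 * s) = 3 * (s * eta)); last by ring.
have -> : ln (N%:R : R) = L by [].
lra.
Qed.
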